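(* Let $p>1$ and let $\mathbf f^*$ be the optimal solution to the minimum weighted $p$-norm flow problem. Then $\mathcal E(\mathbf f^* )\le\frac1pn\|\mathbf r\|_\infty\|\mathbf b\|_1^p$. In addition, for all $(i,j)\in\vec E$, $|f^*(i,j)|\le(nR)^{\frac1p}\|\mathbf b\|_1$, which implies that $|x^*(i)-x^*(j)|\le r(i,j)(nR)^{\frac{p-1}p}\|\mathbf b\|_1^{p-1}$ for all $(i,j)\in\vec E$.
   Context: $G=(V,E)$ is a connected undirected graph with $n$ vertices, weights $r(e)>0$, $R=\max_er(e)/\min_er(e)$, $\|\mathbf r\|_\infty=\max_er(e)$, and fixed orientation $\vec E$ (with $f(j,i)=-f(i,j)$). $\mathbf b\in\mathbb R^V$ with $\sum_ib(i)=0$; a $\mathbf b$-flow has net outflow $b(i)$ at every vertex $i$. $\mathcal E(\mathbf f)=\frac1p\sum_{e\in\vec E}r(e)|f(e)|^p$ and $\mathbf f^*$ minimizes it over $\mathbf b$-flows. $\mathbf x^*$ is an optimal solution of the dual problem $\max_{\mathbf x}\ \mathbf b^\top\mathbf x-(1-\frac1p)\sum_{(i,j)\in\vec E}\big(|x(i)-x(j)|^p/r(i,j)\big)^{\frac1{p-1}}$; optimal $\mathbf f^*,\mathbf x^*$ satisfy $r(i,j)f^*(i,j)|f^*(i,j)|^{p-2}=x^*(i)-x^*(j)$ for all $(i,j)\in\vec E$. *)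

(* Defs.v *)
From HB Require Import structures.
From mathcomp Require Import all_boot all_order all_algebra.
From mathcomp Require Import reals exp.
Set Implicit Arguments. Unset Strict Implicit. Unset Printing Implicit Defensive.
Import Order.TTheory GRing.Theory Num.Theory.
Local Open Scope ring_scope.

(* An undirected graph G = (V,E) with a fixed orientation: every (undirected)
   edge e : E is oriented from [src e] to [dst e]. *)
Section Graph.
Variables (V E : finType) (src dst : E -> V).

Definition simple_oriented_graph : Prop :=
  (forall e, src e != dst e) /\
  (forall e1 e2,
     ((src e1 == src e2) && (dst e1 == dst e2)) ||
     ((src e1 == dst e2) && (dst e1 == src e2)) -> e1 = e2).

Definition adj : rel V := fun u v =>
  [exists e, ((src e == u) && (dst e == v)) || ((src e == v) && (dst e == u))].

Definition connected_graph : Prop := forall u v : V, connect adj u v.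

Variable R : realType.

Definition is_bflow (b : V -> R) (f : E -> R) : Prop :=
  forall i : V,
    \sum_(e | src e == i) f e - \sum_(e | dst e == i) f e = b i.

Definition energy (p : R) (r : E -> R) (f : E -> R) : R :=
  p^-1 * \sum_e r e * (`|f e| `^ p).

Definition optimal_flow (p : R) (r : E -> R) (b : V -> R) (f : E -> R) : Prop :=
  is_bflow b f /\ forall g, is_bflow b g -> energy p r f <= energy p r g.

Definition dual_obj (p : R) (r : E -> R) (b : V -> R) (x : V -> R) : R :=
  \sum_i b i * x i
  - (1 - p^-1) * \sum_e ((`|x (src e) - x (dst e)| `^ p / r e) `^ (p - 1)^-1).

Definition optimal_dual (p : R) (r : E -> R) (b : V -> R) (x : V -> R) : Prop :=
  forall y : V -> R, dual_obj p r b y <= dual_obj p r b x.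

Definition rmax (r : E -> R) : R := \big[Num.max/0]_e r e.
Definition rmin (r : E -> R) : R := \big[Num.min/rmax r]_e r e.
Definition rratio (r : E -> R) : R := rmax r / rmin r.
Definition norm1 (b : V -> R) : R := \sum_i `|b i|.

End Graph.

(* Main.v *)
Require Import Defs.
From HB Require Import structures.
From mathcomp Require Import all_boot all_order all_algebra.
From mathcomp Require Import reals exp.
From mathcomp Require Import ring lra.
Import Order.TTheory GRing.Theory Num.Theory.
Local Open Scope ring_scope.

Section Flow.
Variables (R : realType) (V E : finType) (src dst : E -> V).

Definition dv (h : E -> R) (i : V) : R :=
  \sum_e h e * ((src e == i)%:R - (dst e == i)%:R).

Lemma bflowE (b : V -> R) h : (forall i, dv h i = b i) -> is_bflow src dst b h.
Proof.
move=> H i; rewrite -H /dv.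
under [X in _ = X]eq_bigr do rewrite mulrBr.
rewrite sumrB; congr (_ - _); rewrite big_mkcond /=; apply: eq_bigr => e _;
  by case: eqP => _; rewrite ?mulr1 ?mulr0.
Qed.

Definition sel (u v : V) : option E :=
  [pick e | ((src e == u) && (dst e == v)) || ((src e == v) && (dst e == u))].

Definition stepf (u v : V) (e : E) : R :=
  if sel u v is Some e0 then
    (if e == e0 then (if src e0 == u then 1 else -1) else 0) else 0.

Fixpoint walkf (u : V) (s : seq V) (e : E) : R :=
  if s is v :: s' then stepf u v e + walkf v s' e else 0.

Lemma dv_stepf u v i : adj src dst u v -> u != v ->
  dv (stepf u v) i = (i == u)%:R - (i == v)%:R.
Proof.
move=> /existsP[e1 He1] uv; rewrite /dv /stepf /sel.
case: pickP => [e0 He0|/(_ e1)]; last by rewrite He1.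
rewrite (bigD1 e0) //= big1 => [|e /negbTE ->]; last by rewrite mul0r.
rewrite eqxx addr0.
case/orP: He0 => /andP[/eqP s0 /eqP d0]; rewrite s0 d0 ?eqxx ?(negbTE uv).
  by rewrite mul1r !(eq_sym i).
rewrite eq_sym (negbTE uv) mulN1r opprB !(eq_sym i) //.
Qed.

Lemma dvD h1 h2 i : dv (fun e => h1 e + h2 e) i = dv h1 i + dv h2 i.
Proof. by rewrite /dv -big_split; apply: eq_bigr => e _; rewrite mulrDl. Qed.

Lemma dv0 i : dv (fun _ => 0) i = 0.
Proof. by rewrite /dv big1 // => e _; rewrite mul0r. Qed.

Lemma dv_walkf u s i : path (adj src dst) u s -> uniq (u :: s) ->
  dv (walkf u s) i = (i == u)%:R - (i == last u s)%:R.
Proof.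
elim: s u => [|v s IH] u; first by rewrite /= dv0 subrr.
rewrite [path _ _ _]/= => /andP[auv ps]; rewrite [uniq (u :: _)]/= => /andP[uns us].
rewrite [walkf _ _]/= dvD dv_stepf //; last by apply: contraNneq uns => ->; rewrite inE eqxx.
by rewrite IH // addrA subrK.
Qed.

Lemma stepf_nz u v e : stepf u v e != 0 ->
  [&& (src e \in [:: u; v]), (dst e \in [:: u; v]),
      (src e == u) || (dst e == u) & (`|stepf u v e| == 1)].
Proof.
rewrite /stepf /sel; case: pickP => [e0 He0|]; last by rewrite eqxx.
case: (eqVneq e e0) => [->|_]; last by rewrite eqxx.
move=> _; apply/and4P; split; last by case: ifP; rewrite ?normrN normr1.
- by case/orP: He0 => /andP[/eqP H1 /eqP H2]; rewrite ?H1 ?H2 !inE eqxx ?orbT.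
- by case/orP: He0 => /andP[/eqP H1 /eqP H2]; rewrite ?H1 ?H2 !inE eqxx ?orbT.
- by case/orP: He0 => /andP[/eqP H1 /eqP H2]; rewrite ?H1 ?H2 eqxx ?orbT.
Qed.

Arguments stepf_nz {u v e}.

Lemma stepf_sum u v : \sum_e `|stepf u v e| <= 1.
Proof.
rewrite /stepf /sel; case: pickP => [e0 _|_]; last by rewrite big1 ?normr0.
rewrite (bigD1 e0) //= big1 => [|e /negbTE ->]; last by rewrite normr0.
by rewrite eqxx addr0; case: ifP; rewrite ?normrN normr1.
Qed.

Lemma walkf_bound u s : uniq (u :: s) ->
  [/\ forall e, `|walkf u s e| <= 1,
      \sum_e `|walkf u s e| <= (size s)%:R &
      forall e, walkf u s e != 0 -> (src e \in u :: s) && (dst e \in u :: s)].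
Proof.
elim: s u => [|v s IH] u.
  by move=> _; split => [e|//|e]; rewrite /= ?normr0 ?big1 ?eqxx.
rewrite [uniq (u :: _)]/= => /andP[uns us]; have [IH1 IH2 IH3] := IH v us.
have key e : stepf u v e != 0 -> walkf v s e = 0.
  case/stepf_nz/and4P => _ _ H _; apply/eqP; apply: contraNT uns => /IH3 /andP[H1 H2].
  by case/orP: H => /eqP <-.
rewrite [walkf _ _]/=; split.
- move=> e; case: (eqVneq (stepf u v e) 0) => [->|nz].
    by rewrite add0r.
  by rewrite key // addr0; case/and4P: (stepf_nz nz) => _ _ _ /eqP ->.
- apply: le_trans (_ : \sum_e (`|stepf u v e| + `|walkf v s e|) <= _).
    by apply: ler_sum => e _; apply: ler_normD.
  by rewrite big_split /= -addn1 natrD addrC lerD // stepf_sum.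
- move=> e; case: (eqVneq (stepf u v e) 0) => [->|nz].
    rewrite add0r => /IH3 /andP[]; rewrite !inE => -> ->; by rewrite !orbT.
  case/and4P: (stepf_nz nz) => H1 H2 _ _ _.
  by move: H1 H2; rewrite !inE => /orP[] -> /orP[] ->; rewrite ?orbT.
Qed.

Arguments walkf_bound {u s}.

Lemma size_le (i : V) s : uniq (i :: s) -> ((size s)%:R : R) <= #|V|%:R.
Proof.
move=> /card_uniqP H; rewrite ler_nat; apply: leq_trans (leqnSn _) _.
by rewrite -[(size s).+1]/(size (i :: s)) -H max_card.
Qed.

Arguments size_le {i s}.

Lemma good_flow (b : V -> R) : connected_graph src dst -> \sum_i b i = 0 ->
  exists g, [/\ is_bflow src dst b g, (forall e, `|g e| <= norm1 b) &
                \sum_e `|g e| <= #|V|%:R * norm1 b].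
Proof.
move=> hc hb.
have n1 : 0 <= norm1 b by apply: sumr_ge0 => i _.
case: (pickP (fun _ : V => true)) => [v0 _|V0]; last first.
  exists (fun _ => 0); split => [i|e|]; first by have := V0 i.
    by rewrite normr0.
  by rewrite big1 ?normr0 // mulr_ge0.
have ex i : exists s, [&& path (adj src dst) i s, uniq (i :: s) & last i s == v0].
  have /connectP[s ps ->] := hc i v0.
  case: (shortenP ps) => s' ps' us' _; exists s'; by rewrite ps' us' eqxx.
pose ps i := xchoose (ex i).
have hps i := xchooseP (ex i).
pose g e := \sum_i b i * walkf i (ps i) e.
exists g; split.
- apply: bflowE => j.
  transitivity (\sum_i b i * dv (walkf i (ps i)) j).
    rewrite /dv /g; under eq_bigr do rewrite mulr_suml.
    rewrite exchange_big; apply: eq_bigr => i _; rewrite mulr_sumr.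
    by apply: eq_bigr => e _; rewrite mulrA.
  rewrite (eq_bigr (fun i => b i * (j == i)%:R - b i * (j == v0)%:R)); last first.
    move=> i _; case/and3P: (hps i) => pa un /eqP la.
    by rewrite dv_walkf // la mulrBr.
  rewrite sumrB -mulr_suml hb mul0r subr0 (bigD1 j) //= eqxx mulr1 big1 ?addr0 //.
  by move=> i; rewrite eq_sym => /negbTE ->; rewrite mulr0.
- move=> e; apply: le_trans (ler_norm_sum _ _ _) _; apply: ler_sum => i _.
  rewrite normrM; apply: ler_piMr => //.
  by case/and3P: (hps i) => _ un _; case: (walkf_bound un).
- apply: le_trans (_ : \sum_e \sum_i `|b i| * `|walkf i (ps i) e| <= _).
    apply: ler_sum => e _; apply: le_trans (ler_norm_sum _ _ _) _.
    by apply: ler_sum => i _; rewrite normrM.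
  rewrite exchange_big /= /norm1 mulr_sumr; apply: ler_sum => i _.
  rewrite -mulr_sumr mulrC ler_wpM2r //.
  case/and3P: (hps i) => _ un _; case: (walkf_bound un) => _ H _.
  by apply: le_trans H (size_le un).
Qed.

End Flow.

Theorem mainTheorem18 (R : realType) (V E : finType) (src dst : E -> V)
  (r : E -> R) (b : V -> R) (p : R) (fstar : E -> R) (xstar : V -> R) :
  simple_oriented_graph src dst ->
  connected_graph src dst ->
  (forall e, 0 < r e) ->
  \sum_i b i = 0 ->
  1 < p ->
  optimal_flow src dst p r b fstar ->
  optimal_dual src dst p r b xstar ->
  (forall e, r e * fstar e * (`|fstar e| `^ (p - 2)) = xstar (src e) - xstar (dst e)) ->
  [/\ energy p r fstar <= p^-1 * #|V|%:R * rmax r * (norm1 b `^ p),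
      (forall e, `|fstar e| <= (#|V|%:R * rratio r) `^ p^-1 * norm1 b) &
      (forall e, `|xstar (src e) - xstar (dst e)|
                 <= r e * (#|V|%:R * rratio r) `^ ((p - 1) / p) * (norm1 b `^ (p - 1)))].
Proof.
move=> _ hc rpos hb p1 [fb fopt] _ hx.
have p0 : 0 < p by apply: lt_trans p1.
have p10 : 0 <= p - 1 by rewrite subr_ge0 ltW.
set n : R := #|V|%:R; set B := norm1 b; set M := rmax r.
have n0 : 0 <= n by [].
have B0 : 0 <= B by apply: sumr_ge0 => i _.
have rM e : r e <= M by apply: le_bigmax.
have M0 : 0 <= M.
  rewrite /M /rmax; apply: (big_ind (fun x => 0 <= x)) => // [x y hx0 hy0|e _].
    by rewrite le_max hx0.
  exact: ltW.
have hpow x : 0 <= x -> x <= B -> x `^ p <= x * B `^ (p - 1).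
  move=> x0 xB; rewrite -mulr_powRB1 // ler_wpM2l //.
  by apply: ge0_ler_powR.
have hE : energy p r fstar <= p^-1 * n * M * (B `^ p).
  have [g [gb gB gS]] := @good_flow R V E src dst b hc hb.
  apply: le_trans (fopt g gb) _.
  rewrite /energy -!mulrA; apply: ler_wpM2l; first by rewrite invr_ge0 ltW.
  apply: le_trans (_ : \sum_e M * (`|g e| * B `^ (p - 1)) <= _).
    apply: ler_sum => e _; apply: ler_pM => //; first exact: ltW.
    by rewrite powR_ge0.
    exact: (hpow _ (normr_ge0 _) (gB e)).
  rewrite -mulr_sumr -mulr_suml -(mulr_powRB1 B0 p0).
  have -> : n * (M * (B * B `^ (p - 1))) = (n * B) * (M * B `^ (p - 1)) by ring.
  have h0 : 0 <= M * B `^ (p - 1) by rewrite mulr_ge0 // powR_ge0.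
  by rewrite mulrCA; apply: (ler_wpM2r h0 gS).
have hf e : `|fstar e| <= (n * rratio r) `^ p^-1 * B.
  set mn := rmin r.
  have mn0 : 0 < mn.
    rewrite /mn /rmin; apply: (big_ind (fun x => 0 < x)) => [|x y hx0 hy0|e' _].
    - exact: lt_le_trans (rpos e) (rM e).
    - by rewrite lt_min hx0 hy0.
    - exact: rpos.
  have mne : mn <= r e by apply: bigmin_le.
  set F := `|fstar e|.
  have F0 : 0 <= F by rewrite /F normr_ge0.
  have h1 : r e * F `^ p <= n * M * B `^ p.
    apply: le_trans (_ : \sum_e r e * `|fstar e| `^ p <= _).
      rewrite (bigD1 e) //= lerDl; apply: sumr_ge0 => e' _.
      by rewrite mulr_ge0 ?powR_ge0 // ltW.
    by move: hE; rewrite /energy -!mulrA ler_pM2l ?invr_gt0.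
  have h2 : F `^ p <= (n * rratio r) * B `^ p.
    rewrite /rratio -/M -/mn.
    have -> : n * (M / mn) * B `^ p = (n * M * B `^ p) / mn by rewrite !mulrA mulrAC.
    rewrite ler_pdivlMr // mulrC; apply: le_trans h1.
    by apply: ler_wpM2r => //; exact: powR_ge0.
  have ->: F = (F `^ p) `^ p^-1 by rewrite -powRrM divff ?gt_eqF // powRr1.
  have nR0 : 0 <= n * rratio r by rewrite mulr_ge0 // divr_ge0 // ltW.
  have -> : B = (B `^ p) `^ p^-1 by rewrite -powRrM divff ?gt_eqF // powRr1.
  rewrite -powRM ?powR_ge0 //; apply: ge0_ler_powR => //.
  - by rewrite invr_ge0 ltW.
  - by rewrite nnegrE powR_ge0.
  - by rewrite nnegrE mulr_ge0 // powR_ge0.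
split => // e.
have nR0 : 0 <= n * rratio r.
  rewrite mulr_ge0 // divr_ge0 //; rewrite /rmin.
  apply: (big_ind (fun x => 0 <= x)) => // [x y hx0 hy0|e' _].
  - by rewrite le_min hx0 hy0.
  - exact: ltW.
rewrite -hx !normrM (ger0_norm (ltW (rpos e))) (ger0_norm (powR_ge0 _ _)).
have rhs0 : 0 <= r e * (n * rratio r) `^ ((p - 1) / p) * B `^ (p - 1).
  by rewrite !mulr_ge0 ?powR_ge0 // ltW.
case: (eqVneq (fstar e) 0) => [->|fn0].
  by rewrite normr0 mulr0 mul0r.
have Fn0 : `|fstar e| != 0 by rewrite normr_eq0.
rewrite -mulrA -{1}(powRr1 (normr_ge0 (fstar e))) -powRD; last by rewrite Fn0 implybT.
have -> : 1 + (p - 2) = p - 1 by ring.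
rewrite -mulrA; apply: ler_wpM2l; first exact: ltW.
apply: le_trans (ge0_ler_powR p10 _ _ (hf e)) _.
- by rewrite nnegrE.
- by rewrite nnegrE mulr_ge0 // powR_ge0.
by rewrite powRM ?powR_ge0 // -powRrM [p^-1 * _]mulrC.
Qed.
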